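(* Assume (A2) and (A3). Then for every stage $l\ge1$ of Method (BCV), the number of inner iterations (changes of the index $k$) is finite, i.e. after finitely many steps Step 1 finds no admissible pair and the stage ends with $z^l=x^k$.
   Context: Setting: limit problem $\min_{x\in D}f(x)$ with $D=\{x\in X:\langle a,x\rangle=\beta\}$, $X=\prod_{i=1}^n[\alpha'_i,\alpha''_i]$. Approximating problems $\min_{x\in D_l}f_l(x)$, $l=0,1,2,\dots$, with $D_l=\{x\in X_l:\langle a^l,x\rangle=\beta_l\}$, $X_l=\prod_{i=1}^n[\alpha'_{il},\alpha''_{il}]$, $a^l=(a_{1l},\dots,a_{nl})^\top$. (A2): for each $l$, $D_l\neq\varnothing$, $a_{il}>0$ and $-\infty<\alpha'_{il}<\alpha''_{il}<+\infty$ for all $i$; and $\alpha'_{il}\to\alpha'_i$, $\alpha''_{il}\to\alpha''_i$, $a^l\to a$, $\beta_l\to\beta$ as $l\to\infty$. (A3): each $f_l$ is continuously differentiable on (a neighborhood of) $X_l$, and whenever $y^l\in D_l$ and $y^l\to\bar y$, the gradients satisfy $\nabla f_l(y^l)\to\bar g$ for some $\bar g\in\partial^{\uparrow}f(\bar y)$ (Clarke generalized gradient). Notation: $g_{il}(x)=\partial f_l(x)/\partial x_i$, $h_{il}(x)=g_{il}(x)/a_{il}$; given positive sequence $\{\varepsilon_l\}$, $I_l^-(x)=\{i\in I: x_i\ge\alpha'_{il}+\varepsilon_l/a_{il}\}$, $I_l^+(x)=\{i\in I: x_i\le\alpha''_{il}-\varepsilon_l/a_{il}\}$, where $I=\{1,\dots,n\}$;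 $\pi_V$ is Euclidean projection onto $V$. Method (BCV): choose $z^0\in D_0$, $\sigma\in(0,1)$, $\theta\in(0,1)$, positive sequences $\delta_l\searrow0$, $\varepsilon_l\searrow0$; set $l=1$. Stage $l$: set $k=0$, $x^0=\pi_{D_l}(z^{l-1})$. Step 1: if there exist $i\in I_l^-(x^k)$, $j\in I_l^+(x^k)$ with $h_{il}(x^k)-h_{jl}(x^k)\ge\delta_l$, choose any such pair, set $i_k=i$, $j_k=j$, $\gamma_k=\min\{a_{il}(x^k_i-\alpha'_{il}),\,a_{jl}(\alpha''_{jl}-x^k_j)\}$ and go to Step 2; otherwise set $z^l=x^k$, $l:=l+1$ and start the next stage. Step 2: define $d^k$ by $d^k_i=-1/a_{il}$, $d^k_j=1/a_{jl}$, $d^k_s=0$ for $s\ne i,j$; let $m$ be the smallest nonnegative integer with $f_l(x^k+\theta^m\gamma_kd^k)\le f_l(x^k)+\sigma\theta^m\gamma_k\langle\nabla f_l(x^k),d^k\rangle$; set $\lambda_k=\theta^m\gamma_k$, $x^{k+1}=x^k+\lambda_kd^k$, $k:=k+1$, and return to Step 1. *)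

(* Defs.v *)
(* classical real numbers. Vectors of R^n are modelled as
   nat -> R; only the coordinates 0..n-1 are meaningful (index set
   I = {0,...,n-1}, corresponding to the paper's {1,...,n}). *)
From Stdlib Require Import Reals Lra Lia Arith.
Open Scope R_scope.

Definition vec := nat -> R.

Fixpoint vsum (n : nat) (u : nat -> R) : R :=
  match n with O => 0 | S m => vsum m u + u m end.

Definition dot (n : nat) (u v : vec) : R := vsum n (fun i => u i * v i).
Definition norm (n : nat) (u : vec) : R := sqrt (dot n u u).
Definition vsub (u v : vec) : vec := fun i => u i - v i.
Definition vadd (u v : vec) : vec := fun i => u i + v i.
Definition vscal (t : R) (u : vec) : vec := fun i => t * u i.

Definition vec_cv (n : nat) (y : nat -> vec) (ybar : vec) : Prop :=
  forall i, (i < n)%nat -> Un_cv (fun l => y l i) (ybar i).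

Definition box (n : nat) (lo hi : vec) (x : vec) : Prop :=
  forall i, (i < n)%nat -> lo i <= x i <= hi i.

Definition Dset (n : nat) (lo hi a : vec) (beta : R) (x : vec) : Prop :=
  box n lo hi x /\ dot n a x = beta.

Definition is_open (n : nat) (U : vec -> Prop) : Prop :=
  forall x, U x -> exists r, 0 < r /\ forall y, norm n (vsub y x) < r -> U y.

Definition has_gradient_on (n : nat) (U : vec -> Prop) (f : vec -> R) (g : vec -> vec)
  : Prop :=
  forall x, U x -> forall e, 0 < e -> exists d, 0 < d /\
    forall y, norm n (vsub y x) < d ->
      Rabs (f y - f x - dot n (g x) (vsub y x)) <= e * norm n (vsub y x).

Definition grad_continuous_on (n : nat) (U : vec -> Prop) (g : vec -> vec) : Prop :=
  forall x, U x -> forall i, (i < n)%nat -> forall e, 0 < e -> exists d, 0 < d /\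
    forall y, U y -> norm n (vsub y x) < d -> Rabs (g y i - g x i) < e.

Definition C1_near (n : nat) (X : vec -> Prop) (f : vec -> R) (g : vec -> vec) : Prop :=
  exists U, is_open n U /\ (forall x, X x -> U x) /\
    has_gradient_on n U f g /\ grad_continuous_on n U g.

(* Clarke generalized directional derivative:
   f°(x; d) = limsup_{y -> x, t -> 0+} (f(y + t d) - f(y)) / t.
   clarke_dd_ge n f x d c  <->  f°(x; d) >= c  (in the extended reals). *)
Definition clarke_dd_ge (n : nat) (f : vec -> R) (x d : vec) (c : R) : Prop :=
  forall e, 0 < e -> forall r, 0 < r -> exists y t,
    norm n (vsub y x) < r /\ 0 < t < r /\
    (f (vadd y (vscal t d)) - f y) / t > c - e.

Definition clarke_subgrad (n : nat) (f : vec -> R) (x g : vec) : Prop :=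
  forall d, clarke_dd_ge n f x d (dot n g d).

Definition is_proj (n : nat) (D : vec -> Prop) (z p : vec) : Prop :=
  D p /\ forall y, D y -> norm n (vsub p z) <= norm n (vsub y z).

(* ---- Method (BCV), one stage, with stage data
   lo = alpha'_l, hi = alpha''_l, a = a^l, g = grad f_l, fl = f_l,
   eps = eps_l, delta = delta_l ---- *)

Definition hcoef (a : vec) (g : vec -> vec) (x : vec) (i : nat) : R := g x i / a i.

Definition Iminus (lo a : vec) (eps : R) (x : vec) (i : nat) : Prop :=
  x i >= lo i + eps / a i.

Definition Iplus (hi a : vec) (eps : R) (x : vec) (i : nat) : Prop :=
  x i <= hi i - eps / a i.

Definition admissible (n : nat) (lo hi a : vec) (g : vec -> vec) (eps delta : R)
  (x : vec) (i j : nat) : Prop :=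
  (i < n)%nat /\ (j < n)%nat /\ Iminus lo a eps x i /\ Iplus hi a eps x j /\
  hcoef a g x i - hcoef a g x j >= delta.

Definition gammak (lo hi a : vec) (x : vec) (i j : nat) : R :=
  Rmin (a i * (x i - lo i)) (a j * (hi j - x j)).

Definition dirk (a : vec) (i j : nat) : vec :=
  fun s => if Nat.eqb s i then - (1 / a i)
           else if Nat.eqb s j then 1 / a j else 0.

Definition armijo (n : nat) (lo hi a : vec) (fl : vec -> R) (g : vec -> vec)
  (sigma theta : R) (x : vec) (i j : nat) (m : nat) : Prop :=
  let gam := gammak lo hi a x i j in
  let d := dirk a i j in
  fl (vadd x (vscal (theta ^ m * gam) d))
    <= fl x + sigma * (theta ^ m * gam) * dot n (g x) d.

Definition bcv_step (n : nat) (lo hi a : vec) (fl : vec -> R) (g : vec -> vec)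
  (eps delta sigma theta : R) (x : vec) (i j : nat) (x' : vec) : Prop :=
  admissible n lo hi a g eps delta x i j /\
  exists m : nat,
    armijo n lo hi a fl g sigma theta x i j m /\
    (forall m', (m' < m)%nat -> ~ armijo n lo hi a fl g sigma theta x i j m') /\
    (forall s, x' s = x s + (theta ^ m * gammak lo hi a x i j) * dirk a i j s).

(* Main.v *)
Require Import Defs.
From Stdlib Require Import Reals Lra Lia Arith ClassicalEpsilon FunctionalExtensionality Classical.
Open Scope R_scope.

Lemma vsum_ext n u v : (forall s, (s < n)%nat -> u s = v s) -> vsum n u = vsum n v.
Proof. induction n; simpl; intros H; auto. rewrite IHn by (intros; apply H; lia). rewrite H by lia; auto. Qed.

Lemma vsum_scal n c u : vsum n (fun s => c * u s) = c * vsum n u.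
Proof. induction n; simpl; [ring|]. rewrite IHn; ring. Qed.

Lemma vsum_add n u v : vsum n (fun s => u s + v s) = vsum n u + vsum n v.
Proof. induction n; simpl; [ring|]. rewrite IHn; ring. Qed.

Lemma vsum_le n u v : (forall s, (s < n)%nat -> u s <= v s) -> vsum n u <= vsum n v.
Proof. induction n; simpl; intros H; [lra|]. assert (H1 := IHn (fun s h => H s ltac:(lia))). specialize (H n ltac:(lia)). lra. Qed.

Lemma vsum_const n c : vsum n (fun _ => c) = INR n * c.
Proof. induction n; simpl vsum; [simpl; ring|]. rewrite IHn, S_INR; ring. Qed.

Lemma vsum_nonneg n u : (forall s, (s < n)%nat -> 0 <= u s) -> 0 <= vsum n u.
Proof. intros H. rewrite <- (Rmult_0_r (INR n)), <- vsum_const. apply vsum_le; auto. Qed.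

Lemma vsum_term_le n u i : (forall s, (s < n)%nat -> 0 <= u s) -> (i < n)%nat -> u i <= vsum n u.
Proof. induction n; intros H Hi; [lia|]. simpl.
  assert (0 <= vsum n u) by (apply vsum_nonneg; intros; apply H; lia).
  destruct (Nat.eq_dec i n). subst; lra.
  assert (u i <= vsum n u) by (apply IHn; [intros; apply H; lia | lia]).
  specialize (H n ltac:(lia)). lra. Qed.

Lemma vsum_zero n u : (forall s, (s < n)%nat -> u s = 0) -> vsum n u = 0.
Proof. intros H. rewrite (vsum_ext n u (fun _ => 0)) by auto. rewrite vsum_const; ring. Qed.

Lemma vsum_single n i c : (i < n)%nat -> vsum n (fun s => if Nat.eqb s i then c else 0) = c.
Proof. induction n; intros Hi; [lia|]. simpl.
  destruct (Nat.eq_dec i n).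
  - subst. rewrite vsum_zero. rewrite Nat.eqb_refl; ring.
    intros s Hs. destruct (Nat.eqb_spec s n); [lia|auto].
  - rewrite IHn by lia. destruct (Nat.eqb_spec n i); [lia|ring]. Qed.

Lemma Rabs_vsum n u : Rabs (vsum n u) <= vsum n (fun s => Rabs (u s)).
Proof. induction n; simpl. rewrite Rabs_R0; lra.
  eapply Rle_trans; [apply Rabs_triang|lra]. Qed.

Lemma dot_dirk n u A i j : (i < n)%nat -> (j < n)%nat -> i <> j ->
  dot n u (dirk A i j) = u j / A j - u i / A i.
Proof. intros Hi Hj Hij. unfold dot.
  rewrite (vsum_ext n _ (fun s => (if Nat.eqb s i then - (u i / A i) else 0) + (if Nat.eqb s j then u j / A j else 0))).
  rewrite vsum_add, vsum_single, vsum_single by auto. ring.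
  intros s Hs. unfold dirk. destruct (Nat.eqb_spec s i); destruct (Nat.eqb_spec s j); subst; try lia; unfold Rdiv; ring.
Qed.

Lemma dot_bound n u v eta : (forall s, (s < n)%nat -> Rabs (v s) <= eta) ->
  Rabs (dot n u v) <= vsum n (fun s => Rabs (u s)) * eta.
Proof. intros H. unfold dot. eapply Rle_trans; [apply Rabs_vsum|].
  rewrite Rmult_comm, <- vsum_scal. apply vsum_le. intros s Hs.
  rewrite Rabs_mult. specialize (H s Hs). pose proof (Rabs_pos (u s)). pose proof (Rabs_pos (v s)). nra. Qed.

Lemma norm_scal n h d : norm n (fun s => h * d s) = Rabs h * norm n d.
Proof. unfold norm, dot.
  rewrite (vsum_ext n _ (fun s => (h*h) * (d s * d s))) by (intros; ring).
  rewrite vsum_scal, sqrt_mult_alt by nra.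
  f_equal. rewrite <- sqrt_Rsqr_abs. reflexivity. Qed.

Lemma norm_small n d : 0 < d -> exists eta, 0 < eta /\
  forall v, (forall s, (s < n)%nat -> Rabs (v s) <= eta) -> norm n v < d.
Proof. intros Hd. pose proof (pos_INR n) as Hn.
  exists (d / (INR n + 1)). split. apply Rdiv_lt_0_compat; lra.
  intros v Hv. unfold norm, dot.
  set (eta := d / (INR n + 1)) in *.
  assert (He : 0 < eta) by (apply Rdiv_lt_0_compat; lra).
  assert (vsum n (fun s => v s * v s) <= INR n * (eta * eta)).
  { rewrite <- vsum_const. apply vsum_le. intros s Hs. specialize (Hv s Hs).
    assert (E: v s * v s = Rabs (v s) * Rabs (v s)) by (rewrite <- Rabs_mult; rewrite Rabs_right; nra). pose proof (Rabs_pos (v s)). nra. }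
  assert (Heq : d = eta * (INR n + 1)) by (unfold eta; field; lra).
  assert (INR n * (eta * eta) < d * d) by (rewrite Heq; nra).
  rewrite <- (sqrt_square d) by lra.
  apply sqrt_lt_1_alt. split; [apply vsum_nonneg; intros; nra | lra]. Qed.

Lemma pow_le1 t m : 0 <= t <= 1 -> t ^ m <= 1.
Proof. intros H. induction m; simpl; [lra|]. pose proof (pow_le t m (proj1 H)). nra. Qed.

Fixpoint subseq (pk : nat -> nat -> nat) (p : nat) : nat :=
  match p with O => pk O O | S q => pk (S (subseq pk q)) (S q) end.

Definition incr (phi : nat -> nat) := forall p, (phi p < phi (S p))%nat.

Lemma incr_lt phi : incr phi -> forall p q, (p < q)%nat -> (phi p < phi q)%nat.
Proof. intros H p q Hpq. induction Hpq. apply H. specialize (H m). lia. Qed.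

Lemma incr_le phi : incr phi -> forall p q, (p <= q)%nat -> (phi p <= phi q)%nat.
Proof. intros H p q Hpq. destruct (Nat.eq_dec p q). subst; lia.
  pose proof (incr_lt phi H p q ltac:(lia)). lia. Qed.

Lemma incr_ge phi : incr phi -> forall p, (p <= phi p)%nat.
Proof. intros H p. induction p. lia. specialize (H p). lia. Qed.

Lemma cv_subseq u L phi : incr phi -> Un_cv u L -> Un_cv (fun p => u (phi p)) L.
Proof. intros Hi Hc e He. destruct (Hc e He) as [N HN]. exists N. intros p Hp.
  apply HN. pose proof (incr_ge phi Hi p). lia. Qed.

Lemma BW1 (u : nat -> R) a b : (forall k, a <= u k <= b) ->
  exists phi, incr phi /\ exists L, Un_cv (fun p => u (phi p)) L.
Proof. intros Hab.
  destruct (Bolzano_Weierstrass u (fun c => a <= c <= b) (compact_P3 a b) Hab) as [L HL].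
  assert (H : forall N m, exists p, (N <= p)%nat /\ Rabs (u p - L) < / (INR m + 1)).
  { intros N m. assert (Hp : 0 < / (INR m + 1)) by (apply Rinv_0_lt_compat; pose proof (pos_INR m); lra).
    destruct (HL (disc L (mkposreal _ Hp)) N) as [p [Hp1 Hp2]].
    - exists (mkposreal _ Hp). intros y Hy; exact Hy.
    - exists p; split; auto. }
  set (pk := fun N m => proj1_sig (constructive_indefinite_description _ (H N m))).
  assert (Hpk : forall N m, (N <= pk N m)%nat /\ Rabs (u (pk N m) - L) < / (INR m + 1)).
  { intros N m. unfold pk. destruct (constructive_indefinite_description _ (H N m)); auto. }
  exists (subseq pk). split.
  - intros p. simpl. destruct (Hpk (S (subseq pk p)) (S p)). lia.
  - exists L. intros e He. destruct (archimed_cor1 e He) as [N [HN1 HN2]].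
    exists N. intros p Hp. unfold R_dist.
    assert (Hb : Rabs (u (subseq pk p) - L) < / (INR p + 1)).
    { destruct p; simpl; [apply Hpk|]. apply Hpk. }
    assert (/ (INR p + 1) <= / INR N).
    { apply Rinv_le_contravar. apply lt_0_INR; lia. apply le_INR in Hp. lra. }
    lra.
Qed.

Lemma BWn m (u : nat -> vec) (lo hi : vec) :
  (forall k s, (s < m)%nat -> lo s <= u k s <= hi s) ->
  exists phi, incr phi /\ exists xs : vec, forall s, (s < m)%nat ->
    Un_cv (fun p => u (phi p) s) (xs s).
Proof. induction m; intros H.
  - exists (fun p => p). split. intros p; lia. exists (fun _ => 0). intros; lia.
  - destruct IHm as [phi [Hphi [xs Hxs]]]. intros; apply H; lia.
    destruct (BW1 (fun p => u (phi p) m) (lo m) (hi m)) as [psi [Hpsi [L HL]]].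
    intros; apply H; lia.
    exists (fun p => phi (psi p)). split.
    + intros p. apply incr_lt; auto.
    + exists (fun s => if Nat.eqb s m then L else xs s). intros s Hs.
      destruct (Nat.eqb_spec s m). subst; exact HL.
      apply (cv_subseq (fun p => u (phi p) s)); auto. apply Hxs; lia.
Qed.

Lemma cv_bounds w L a b : Un_cv w L -> (forall p, a <= w p <= b) -> a <= L <= b.
Proof. intros Hc Hb. split; apply Rnot_lt_le; intros Hl.
  - destruct (Hc (a - L) ltac:(lra)) as [N HN]. specialize (HN N (le_n _)). specialize (Hb N).
    unfold R_dist in HN. destruct (Rabs_def2 _ _ HN). lra.
  - destruct (Hc (L - b) ltac:(lra)) as [N HN]. specialize (HN N (le_n _)). specialize (Hb N).
    unfold R_dist in HN. destruct (Rabs_def2 _ _ HN). lra.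
Qed.

Lemma eventually_all m (P : nat -> nat -> Prop) :
  (forall s, (s < m)%nat -> exists N, forall p, (N <= p)%nat -> P s p) ->
  exists N, forall s, (s < m)%nat -> forall p, (N <= p)%nat -> P s p.
Proof. induction m; intros H. exists O; intros; lia.
  destruct IHm as [N1 H1]. intros; apply H; lia.
  destruct (H m ltac:(lia)) as [N2 H2]. exists (Nat.max N1 N2).
  intros s Hs p Hp. destruct (Nat.eq_dec s m). subst; apply H2; lia. apply H1; lia. Qed.

Lemma uniform_r m (P : nat -> R -> Prop) :
  (forall s r r', 0 < r' <= r -> P s r -> P s r') ->
  (forall s, (s < m)%nat -> exists r, 0 < r /\ P s r) ->
  exists r, 0 < r /\ forall s, (s < m)%nat -> P s r.
Proof. intros Hm. induction m; intros H. exists 1; split; [lra|intros; lia].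
  destruct IHm as [r1 [Hr1 H1]]. intros; apply H; lia.
  destruct (H m ltac:(lia)) as [r2 [Hr2 H2]]. exists (Rmin r1 r2).
  split. apply Rmin_glb_lt; auto.
  intros s Hs. destruct (Nat.eq_dec s m). subst. apply (Hm _ r2); auto. split. apply Rmin_glb_lt; auto. apply Rmin_r.
  apply (Hm _ r1); auto. split. apply Rmin_glb_lt; auto. apply Rmin_l. apply H1; lia. Qed.

Lemma box_move n lo hi A x i j c :
  (forall s, (s < n)%nat -> 0 < A s) -> box n lo hi x -> (i < n)%nat -> (j < n)%nat -> i <> j ->
  0 <= c <= gammak lo hi A x i j -> box n lo hi (vadd x (vscal c (dirk A i j))).
Proof. intros HA Hx Hi Hj Hij Hc s Hs. unfold vadd, vscal, dirk, gammak in *.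
  pose proof (Rmin_l (A i * (x i - lo i)) (A j * (hi j - x j))).
  pose proof (Rmin_r (A i * (x i - lo i)) (A j * (hi j - x j))).
  destruct (Nat.eqb_spec s i).
  - subst. pose proof (HA i Hi). pose proof (Hx i Hi).
    assert (E : A i * (1 / A i) = 1) by (field; lra).
    assert (0 < 1 / A i) by (apply Rdiv_lt_0_compat; lra). split; nra.
  - destruct (Nat.eqb_spec s j).
    + subst. pose proof (HA j Hj). pose proof (Hx j Hj).
      assert (E : A j * (1 / A j) = 1) by (field; lra).
      assert (0 < 1 / A j) by (apply Rdiv_lt_0_compat; lra). split; nra.
    + pose proof (Hx s Hs). lra.
Qed.

Lemma step_facts n lo hi A F G eps delta sigma theta x i j x' :
  (forall s, (s < n)%nat -> 0 < A s) -> 0 < theta < 1 -> 0 < delta -> 0 < eps -> box n lo hi x ->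
  bcv_step n lo hi A F G eps delta sigma theta x i j x' ->
  (i < n)%nat /\ (j < n)%nat /\ i <> j /\ eps <= gammak lo hi A x i j /\
  0 < A j * (x' j - x j) <= gammak lo hi A x i j /\
  x' = vadd x (vscal (A j * (x' j - x j)) (dirk A i j)) /\
  dot n (G x) (dirk A i j) <= - delta /\
  F x' <= F x + sigma * (A j * (x' j - x j)) * dot n (G x) (dirk A i j) /\
  (A j * (x' j - x j) < eps ->
     (A j * (x' j - x j)) / theta <= gammak lo hi A x i j /\
     F (vadd x (vscal ((A j * (x' j - x j)) / theta) (dirk A i j)))
       > F x + sigma * ((A j * (x' j - x j)) / theta) * dot n (G x) (dirk A i j)).
Proof. intros HA Ht Hd He Hx [[Hi [Hj [Hm [Hp Hh]]]] [m [Harm [Hmin Hupd]]]].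
  unfold hcoef, Iminus, Iplus in *.
  assert (Hij : i <> j) by (intro; subst; lra).
  pose proof (HA i Hi). pose proof (HA j Hj).
  assert (Hgam : eps <= gammak lo hi A x i j).
  { unfold gammak. apply Rmin_glb.
    - assert (E : A i * (eps / A i) = eps) by (field; lra). nra.
    - assert (E : A j * (eps / A j) = eps) by (field; lra). nra. }
  set (gam := gammak lo hi A x i j) in *.
  assert (Hlam : A j * (x' j - x j) = theta ^ m * gam).
  { rewrite Hupd. unfold dirk. rewrite Nat.eqb_refl. destruct (Nat.eqb_spec j i); [lia|]. field; lra. }
  rewrite Hlam.
  assert (Htm : 0 < theta ^ m) by (apply pow_lt; lra).
  assert (Htm1 : theta ^ m <= 1) by (apply pow_le1; lra).
  assert (HD : dot n (G x) (dirk A i j) <= - delta) by (rewrite dot_dirk by auto; lra).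
  assert (Hx' : x' = vadd x (vscal (theta ^ m * gam) (dirk A i j))).
  { apply functional_extensionality; intros s; rewrite Hupd; reflexivity. }
  split; [auto|]. split; [auto|]. split; [auto|]. split; [auto|].
  split; [split; nra|]. split; [auto|]. split; [auto|]. split.
  { rewrite Hx'. exact Harm. }
  intros Hl. destruct m. { simpl in *. lra. }
  replace (theta ^ S m * gam / theta) with (theta ^ m * gam) by (simpl; field; lra).
  pose proof (pow_le1 theta m ltac:(lra)). pose proof (pow_lt theta m ltac:(lra)).
  split. { assert (0 <= gam) by lra. nra. }
  apply Rnot_le_gt. apply (Hmin m). lia.
Qed.

Lemma deriv_line n U F G x d c : has_gradient_on n U F G -> U (vadd x (vscal c d)) ->
  derivable_pt_lim (fun s => F (vadd x (vscal s d))) c (dot n (G (vadd x (vscal c d))) d).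
Proof. intros Hg HU e He.
  set (y := vadd x (vscal c d)) in *.
  set (N := norm n d).
  assert (HN : 0 <= N) by (unfold N, norm; apply sqrt_pos).
  destruct (Hg y HU (e / (2 * (N + 1)))) as [d0 [Hd0 Hd0']].
  { apply Rdiv_lt_0_compat; lra. }
  assert (Hdp : 0 < d0 / (N + 1)) by (apply Rdiv_lt_0_compat; lra).
  exists (mkposreal _ Hdp). intros h Hh0 Hh. simpl in Hh.
  assert (E1 : vadd x (vscal (c + h) d) = vadd y (vscal h d)).
  { apply functional_extensionality; intros s; unfold y, vadd, vscal; ring. }
  assert (E2 : vsub (vadd y (vscal h d)) y = (fun s => h * d s)).
  { apply functional_extensionality; intros s; unfold vadd, vsub, vscal; ring. }
  rewrite E1. specialize (Hd0' (vadd y (vscal h d))). rewrite E2, norm_scal in Hd0'.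
  fold N in Hd0'.
  assert (Hah : 0 < Rabs h) by (apply Rabs_pos_lt; auto).
  assert (Hlt : Rabs h * N < d0).
  { assert (Rabs h * (N + 1) < d0).
    { apply (Rmult_lt_compat_r (N+1)) in Hh; [|lra].
      replace (d0 / (N + 1) * (N + 1)) with d0 in Hh by (field; lra). lra. }
    nra. }
  specialize (Hd0' Hlt).
  assert (E3 : dot n (G y) (fun s => h * d s) = h * dot n (G y) d).
  { unfold dot. rewrite <- vsum_scal. apply vsum_ext; intros; ring. }
  rewrite E3 in Hd0'.
  set (Q := F (vadd y (vscal h d)) - F y - h * dot n (G y) d) in *.
  replace ((F (vadd y (vscal h d)) - F y) / h - dot n (G y) d) with (Q / h) by (unfold Q; field; auto).
  unfold Rdiv. rewrite Rabs_mult, Rabs_inv.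
  assert (Hq : Rabs Q * / Rabs h <= e / (2 * (N + 1)) * N).
  { apply (Rmult_le_reg_r (Rabs h)); auto.
    replace (Rabs Q * / Rabs h * Rabs h) with (Rabs Q) by (field; lra). lra. }
  assert (e / (2 * (N + 1)) * N < e).
  { replace (e / (2 * (N + 1)) * N) with (e * (N / (2 * (N + 1)))) by (field; lra).
    assert (N / (2 * (N + 1)) < 1).
    { apply (Rmult_lt_reg_r (2 * (N+1))); [lra|]. replace (N / (2 * (N + 1)) * (2 * (N + 1))) with N by (field; lra). lra. }
    nra. }
  lra.
Qed.

Lemma Rabs_low a : - Rabs a <= a.
Proof. pose proof (Rle_abs (-a)). rewrite Rabs_Ropp in H. lra. Qed.

Lemma dirk_bound n A i j s M : (forall s, (s < n)%nat -> 0 < A s) ->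
  (forall s, (s < n)%nat -> 1 / A s <= M) -> (i < n)%nat -> (j < n)%nat -> 0 <= M ->
  Rabs (dirk A i j s) <= M.
Proof. intros HA HM Hi Hj HM0. unfold dirk.
  destruct (Nat.eqb s i). rewrite Rabs_Ropp, Rabs_right. auto.
  apply Rle_ge, Rlt_le, Rdiv_lt_0_compat; auto; lra.
  destruct (Nat.eqb s j). rewrite Rabs_right. auto.
  apply Rle_ge, Rlt_le, Rdiv_lt_0_compat; auto; lra.
  rewrite Rabs_R0; auto. Qed.

Lemma core n lo hi A F G eps delta sigma theta (x : nat -> vec) ii jj :
  (forall s, (s < n)%nat -> 0 < A s) -> C1_near n (box n lo hi) F G ->
  0 < sigma < 1 -> 0 < theta < 1 -> 0 < delta -> 0 < eps -> box n lo hi (x O) ->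
  (forall k, bcv_step n lo hi A F G eps delta sigma theta (x k) (ii k) (jj k) (x (S k))) -> False.
Proof.
  intros HA [U [_ [HXU [Hdiff Hcont]]]] Hs Ht Hd He Hx0 Hst.
  set (lam k := A (jj k) * (x (S k) (jj k) - x k (jj k))).
  assert (Hbox : forall k, box n lo hi (x k)).
  { induction k; auto.
    destruct (step_facts n lo hi A F G eps delta sigma theta (x k) (ii k) (jj k) (x (S k)) HA Ht Hd He IHk (Hst k))
      as [Hi [Hj [Hij [Hg [Hl [Hx' _]]]]]].
    rewrite Hx'. apply box_move; auto; lra. }
  assert (SF := fun k => step_facts n lo hi A F G eps delta sigma theta (x k) (ii k) (jj k) (x (S k)) HA Ht Hd He (Hbox k) (Hst k)).
  assert (Hlp : forall k, 0 < lam k).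
  { intros k. destruct (SF k) as [_ [_ [_ [_ [Hl _]]]]]. apply Hl. }
  assert (Hdec : forall k, F (x (S k)) <= F (x k) - sigma * delta * lam k).
  { intros k. destruct (SF k) as [_ [_ [_ [_ [Hl [_ [HD [Ha _]]]]]]]]. fold (lam k) in Hl, Ha.
    assert (0 < sigma * lam k) by nra. nra. }
  assert (Hmono : forall k q, (k <= q)%nat -> F (x q) <= F (x k)).
  { intros k q Hkq. induction Hkq. lra. pose proof (Hdec m). pose proof (Hlp m).
    assert (0 < sigma * delta * lam m) by (apply Rmult_lt_0_compat; nra). lra. }
  assert (Hpart : forall k, F (x k) <= F (x O) - sigma * delta * vsum k lam).
  { induction k; simpl. lra. pose proof (Hdec k). lra. }
  assert (Hn : (0 < n)%nat).
  { destruct (SF O) as [Hi _]. lia. }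
  destruct (BWn n x lo hi) as [phi [Hphi [xs Hxs]]].
  { intros k s Hs'. apply (Hbox k s Hs'). }
  assert (Hxsbox : box n lo hi xs).
  { intros s Hs'. apply (cv_bounds (fun p => x (phi p) s)). apply Hxs; auto.
    intros p. apply (Hbox (phi p) s Hs'). }
  assert (HUxs := HXU xs Hxsbox).
  assert (Hcoord : forall eta, 0 < eta -> exists P, forall s, (s < n)%nat -> forall p, (P <= p)%nat ->
             Rabs (x (phi p) s - xs s) <= eta).
  { intros eta Heta. apply (eventually_all n (fun s p => Rabs (x (phi p) s - xs s) <= eta)).
    intros s Hs'. destruct (Hxs s Hs' eta Heta) as [N HN]. exists N. intros p Hp.
    apply Rlt_le. apply HN. lia. }
  destruct (Hdiff xs HUxs 1 ltac:(lra)) as [d0 [Hd0 Hd0']].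
  destruct (norm_small n d0 Hd0) as [eta [Heta Heta']].
  destruct (Hcoord eta Heta) as [P0 HP0].
  set (L0 := F xs - vsum n (fun s => Rabs (G xs s)) * eta - d0).
  assert (Hlow : forall k, L0 <= F (x k)).
  { intros k. assert (Hk : (k <= phi (P0 + k))%nat) by (pose proof (incr_ge phi Hphi (P0 + k)); lia).
    eapply Rle_trans; [|apply (Hmono _ _ Hk)].
    set (y := x (phi (P0 + k)%nat)).
    assert (Hv : forall s, (s < n)%nat -> Rabs (vsub y xs s) <= eta).
    { intros s Hs'. apply HP0; auto; lia. }
    assert (Hnv := Heta' _ Hv).
    specialize (Hd0' y Hnv).
    pose proof (dot_bound n (G xs) (vsub y xs) eta Hv).
    pose proof (Rabs_low (dot n (G xs) (vsub y xs))).
    pose proof (Rabs_low (F y - F xs - dot n (G xs) (vsub y xs))).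
    unfold L0. lra. }
  assert (Hsd : 0 < sigma * delta) by nra.
  assert (Hub : forall k, vsum k lam <= (F (x O) - L0) / (sigma * delta)).
  { intros k. pose proof (Hpart k). pose proof (Hlow k).
    apply (Rmult_le_reg_r (sigma * delta)); auto.
    replace ((F (x O) - L0) / (sigma * delta) * (sigma * delta)) with (F (x O) - L0) by (field; lra). lra. }
  destruct (growing_cv (fun k => vsum k lam)) as [ell Hell].
  { intros k. simpl. pose proof (Hlp k). lra. }
  { exists ((F (x O) - L0) / (sigma * delta)). intros r [k Hk]. rewrite Hk. apply Hub. }
  assert (Hlam0 : forall e, 0 < e -> exists N, forall k, (N <= k)%nat -> lam k < e).
  { intros e He'. destruct (Hell (e/2) ltac:(lra)) as [N HN]. exists N. intros k Hk.
    pose proof (HN k Hk). pose proof (HN (S k) ltac:(lia)). unfold R_dist in *. simpl in *.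
    destruct (Rabs_def2 _ _ H). destruct (Rabs_def2 _ _ H0). lra. }
  set (M := vsum n (fun s => 1 / A s)).
  assert (HM : forall s, (s < n)%nat -> 1 / A s <= M).
  { intros s Hs'. apply (vsum_term_le n (fun s => 1 / A s)); auto.
    intros s' Hs''. apply Rlt_le, Rdiv_lt_0_compat; [lra | auto]. }
  assert (HMpos : 0 < M).
  { pose proof (HM O Hn). assert (0 < 1 / A O) by (apply Rdiv_lt_0_compat; [lra|auto]). lra. }
  set (e0 := (1 - sigma) * delta / (4 * M)).
  assert (He0 : 0 < e0) by (unfold e0; apply Rdiv_lt_0_compat; nra).
  destruct (uniform_r n (fun s r => forall y, U y -> norm n (vsub y xs) < r -> Rabs (G y s - G xs s) < e0))
    as [r [Hr Hr']].
  { intros s r1 r2 Hr12 HP y Hy Hny. apply HP; auto. lra. }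
  { intros s Hs'. destruct (Hcont xs HUxs s Hs' e0 He0) as [r [Hr Hr']]. exists r; split; auto. }
  destruct (norm_small n r Hr) as [eta2 [Heta2 Heta2']].
  destruct (Hcoord (eta2/2) ltac:(lra)) as [P1 HP1].
  assert (Hbd : 0 < Rmin eps (theta * eta2 / (2 * M))).
  { apply Rmin_glb_lt; auto. apply Rdiv_lt_0_compat; nra. }
  destruct (Hlam0 _ Hbd) as [N1 HN1].
  set (p := Nat.max P1 N1).
  set (k := phi p).
  assert (Hkp : (p <= k)%nat) by apply (incr_ge phi Hphi).
  assert (Hlk := HN1 k ltac:(unfold p in *; lia)).
  pose proof (Rmin_l eps (theta * eta2 / (2 * M))).
  pose proof (Rmin_r eps (theta * eta2 / (2 * M))).
  destruct (SF k) as [Hi [Hj [Hij [Hg [Hl [_ [HD [_ Hfail]]]]]]]].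
  fold (lam k) in Hl, Hfail.
  destruct (Hfail ltac:(lra)) as [Htg Hf].
  set (i := ii k) in *. set (j := jj k) in *.
  set (d := dirk A i j) in *.
  set (t := lam k / theta) in *.
  assert (Htpos : 0 < t) by (unfold t; apply Rdiv_lt_0_compat; [apply Hlp | lra]).
  destruct (MVT_cor2 (fun s => F (vadd (x k) (vscal s d)))
             (fun s => dot n (G (vadd (x k) (vscal s d))) d) 0 t Htpos) as [c [Hmvt Hc]].
  { intros c Hc. apply deriv_line with U; auto. apply HXU. apply box_move; auto. lra. }
  assert (E0 : vadd (x k) (vscal 0 d) = x k).
  { apply functional_extensionality; intros s; unfold vadd, vscal; ring. }
  simpl in Hmvt. rewrite E0 in Hmvt.
  set (yc := vadd (x k) (vscal c d)) in *.
  set (Dy := dot n (G yc) d) in *.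
  set (D := dot n (G (x k)) d) in *.
  assert (HDy : Dy > sigma * D).
  { assert (Dy * t > sigma * t * D) by lra. nra. }
  assert (Hxk : forall s, (s < n)%nat -> Rabs (x k s - xs s) <= eta2 / 2).
  { intros s Hs'. apply HP1; auto. unfold p; lia. }
  assert (HtM : t * M < eta2 / 2).
  { unfold t. apply (Rmult_lt_reg_r theta); [lra|].
    replace (lam k / theta * M * theta) with (lam k * M) by (field; lra).
    assert (lam k < theta * eta2 / (2 * M)) by lra.
    replace (eta2 / 2 * theta) with (theta * eta2 / (2 * M) * M) by (field; lra). nra. }
  assert (Hyc : forall s, (s < n)%nat -> Rabs (vsub yc xs s) <= eta2).
  { intros s Hs'. unfold vsub, yc, vadd, vscal.
    replace (x k s + c * d s - xs s) with ((x k s - xs s) + c * d s) by ring.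
    eapply Rle_trans; [apply Rabs_triang|]. rewrite Rabs_mult.
    pose proof (dirk_bound n A i j s M HA HM Hi Hj ltac:(lra)). fold d in H1.
    rewrite (Rabs_right c) by lra. pose proof (Hxk s Hs'). pose proof (Rabs_pos (d s)). nra. }
  assert (Hxk' : forall s, (s < n)%nat -> Rabs (vsub (x k) xs s) <= eta2).
  { intros s Hs'. unfold vsub. pose proof (Hxk s Hs'). lra. }
  assert (HUyc : U yc) by (apply HXU; apply box_move; auto; lra).
  assert (HUxk : U (x k)) by (apply HXU; apply Hbox).
  pose proof (Hr' i Hi yc HUyc (Heta2' _ Hyc)) as Ci1.
  pose proof (Hr' j Hj yc HUyc (Heta2' _ Hyc)) as Cj1.
  pose proof (Hr' i Hi (x k) HUxk (Heta2' _ Hxk')) as Ci2.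
  pose proof (Hr' j Hj (x k) HUxk (Heta2' _ Hxk')) as Cj2.
  unfold Dy, D, d in HDy, HD. rewrite (dot_dirk n (G yc)), (dot_dirk n (G (x k))) in HDy by auto. rewrite (dot_dirk n (G (x k))) in HD by auto.
  pose proof (HM i Hi). pose proof (HM j Hj). pose proof (HA i Hi). pose proof (HA j Hj).
  set (ri := 1 / A i) in *. set (rj := 1 / A j) in *.
  assert (Ri : forall a, a / A i = a * ri) by (intros; unfold ri; field; lra).
  assert (Rj : forall a, a / A j = a * rj) by (intros; unfold rj; field; lra).
  rewrite !Ri, !Rj in HDy, HD.
  assert (0 < ri) by (unfold ri; apply Rdiv_lt_0_compat; lra).
  assert (0 < rj) by (unfold rj; apply Rdiv_lt_0_compat; lra).
  destruct (Rabs_def2 _ _ Ci1). destruct (Rabs_def2 _ _ Cj1).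
  destruct (Rabs_def2 _ _ Ci2). destruct (Rabs_def2 _ _ Cj2).
  assert (E4 : 4 * e0 * M = (1 - sigma) * delta) by (unfold e0; field; lra).
  assert ((G yc j - G (x k) j) * rj <= 2 * e0 * M) by nra.
  assert ((G (x k) i - G yc i) * ri <= 2 * e0 * M) by nra.
  set (DD := G (x k) j * rj - G (x k) i * ri) in *.
  set (DY := G yc j * rj - G yc i * ri) in *.
  assert (EDD : G (x k) j / A j - G (x k) i / A i = DD) by (unfold DD; rewrite Ri, Rj; ring).
  rewrite EDD in HDy.
  assert (DY - DD = (G yc j - G (x k) j) * rj + (G (x k) i - G yc i) * ri) by (unfold DY, DD; ring).
  assert ((1 - sigma) * (- DD - delta) >= 0) by nra.
  nra.
Qed.
Theorem proposition4p1
  (n : nat)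
  (* limit problem data *)
  (alo ahi a : vec) (beta : R) (f : vec -> R)
  (* approximating problems data, indexed by l *)
  (alo_l ahi_l a_l : nat -> vec) (beta_l : nat -> R)
  (f_l : nat -> vec -> R) (g_l : nat -> vec -> vec)
  (* (A2) *)
  (HDne : forall l, exists x, Dset n (alo_l l) (ahi_l l) (a_l l) (beta_l l) x)
  (Hapos : forall l i, (i < n)%nat -> 0 < a_l l i)
  (Hlohi : forall l i, (i < n)%nat -> alo_l l i < ahi_l l i)
  (Hcvlo : vec_cv n alo_l alo)
  (Hcvhi : vec_cv n ahi_l ahi)
  (Hcva : vec_cv n a_l a)
  (Hcvbeta : Un_cv beta_l beta)
  (* (A3) *)
  (HC1 : forall l, C1_near n (box n (alo_l l) (ahi_l l)) (f_l l) (g_l l))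
  (Hgrad : forall (y : nat -> vec) (ybar : vec),
      (forall l, Dset n (alo_l l) (ahi_l l) (a_l l) (beta_l l) (y l)) ->
      vec_cv n y ybar ->
      exists gbar, clarke_subgrad n f ybar gbar /\
                   vec_cv n (fun l => g_l l (y l)) gbar)
  (* parameters of Method (BCV) *)
  (sigma theta : R) (delta eps : nat -> R)
  (Hsigma : 0 < sigma < 1) (Htheta : 0 < theta < 1)
  (Hdpos : forall l, 0 < delta l) (Hddec : Un_decreasing delta) (Hdcv : Un_cv delta 0)
  (Hepos : forall l, 0 < eps l) (Hedec : Un_decreasing eps) (Hecv : Un_cv eps 0)
  (* stage l >= 1, started from z^{l-1} in D_{l-1} *)
  (l : nat) (Hl : (1 <= l)%nat)
  (z : vec) (Hz : Dset n (alo_l (l - 1)%nat) (ahi_l (l - 1)%nat) (a_l (l - 1)%nat)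
                        (beta_l (l - 1)%nat) z)
  (* a run of the inner iterations of stage l *)
  (x : nat -> vec) (ii jj : nat -> nat)
  (Hx0 : is_proj n (Dset n (alo_l l) (ahi_l l) (a_l l) (beta_l l)) z (x O))
  (Hstep : forall k,
      (exists i j, admissible n (alo_l l) (ahi_l l) (a_l l) (g_l l) (eps l) (delta l)
                              (x k) i j) ->
      bcv_step n (alo_l l) (ahi_l l) (a_l l) (f_l l) (g_l l) (eps l) (delta l)
               sigma theta (x k) (ii k) (jj k) (x (S k))) :
  exists K : nat,
    ~ (exists i j, admissible n (alo_l l) (ahi_l l) (a_l l) (g_l l) (eps l) (delta l)
                              (x K) i j).
Proof.
  apply NNPP; intros Hno.
  assert (Hall : forall k, exists i j, admissible n (alo_l l) (ahi_l l) (a_l l) (g_l l) (eps l) (delta l) (x k) i j).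
  { intros k. apply NNPP; intro Hk. apply Hno; exists k; exact Hk. }
  apply (core n (alo_l l) (ahi_l l) (a_l l) (f_l l) (g_l l) (eps l) (delta l) sigma theta x ii jj).
  - intros s Hs; apply Hapos; auto.
  - apply HC1.
  - auto.
  - auto.
  - apply Hdpos.
  - apply Hepos.
  - destruct Hx0 as [[Hb _] _]; exact Hb.
  - intros k; apply Hstep, Hall.
Qed.
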